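(* Let $\mathfrak g$ be a Lie algebra over a field $\mathbb k$ and $X$ its associated binary SD object. The homomorphism $\Psi^2\colon H^2_{\rm Lie}(\mathfrak g;\mathfrak g)\to H^2_{\rm BSD}(X;X)$ induced by $\phi\mapsto[(a,x)\otimes(b,y)\mapsto(0,\phi(x,y))]$ is injective. If in addition $\mathfrak g$ has trivial center, $\Psi^2$ is an isomorphism $H^2_{\rm Lie}(\mathfrak g;\mathfrak g)\cong H^2_{\rm BSD}(X;X)$.
   Context: Associated binary SD object: $X=\mathbb k\oplus\mathfrak g$, $\Delta(a,x)=(a,x)\otimes(1,0)+(1,0)\otimes(0,x)$, $\varepsilon(a,x)=a$, $q((a,x)\otimes(b,y))=(ab,bx+[x,y])$; Sweedler $\Delta(w)=w^{(1)}\otimes w^{(2)}$; $\tau$ the flip. BSD cohomology: $C^1_{\rm BSD}$ = linear $f\colon X\to X$ with $\Delta f=(f\otimes\mathbb 1+\mathbb 1\otimes f)\Delta$; $C^2_{\rm BSD}$ = linear $\phi\colon X\otimes X\to X$ with $\Delta\phi=(\phi\otimes q+q\otimes\phi)(\mathbb 1\otimes\tau\otimes\mathbb 1)(\Delta\otimes\Delta)$; $\delta^1f(u\otimes v)=f(q(u\otimes v))-q(f(u)\otimes v)-q(u\otimes f(v))$; $\delta^2\phi(u\otimes v\otimes w)=q(\phi(u\otimes v)\otimes w)+\phi(q(u\otimes v)\otimes w)-\phi(q(u\otimes w^{(1)})\otimes q(v\otimes w^{(2)}))-q(\phi(u\otimes w^{(1)})\otimes q(v\otimes w^{(2)}))-q(q(u\otimes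 w^{(1)})\otimes\phi(v\otimes w^{(2)}))$; $H^2_{\rm BSD}=(C^2_{\rm BSD}\cap\ker\delta^2)/\delta^1(C^1_{\rm BSD})$. Lie cohomology: $2$-cochains are alternating bilinear $\phi\colon\mathfrak g\times\mathfrak g\to\mathfrak g$; $\delta^2\phi(x,y,z)=[\phi(x,y),z]+[\phi(y,z),x]+[\phi(z,x),y]+\phi([x,y],z)+\phi([y,z],x)+\phi([z,x],y)$; $\delta^1f(x,y)=f([x,y])-[f(x),y]-[x,f(y)]$ for linear $f\colon\mathfrak g\to\mathfrak g$; $H^2_{\rm Lie}=\ker\delta^2/\operatorname{im}\delta^1$. *)

(* Defs.v *)
From HB Require Import structures.
From mathcomp Require Import all_boot all_algebra.
Set Implicit Arguments. Unset Strict Implicit. Unset Printing Implicit Defensive.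
Import GRing.Theory.
Local Open Scope ring_scope.

Section BSD.
Variables (k : fieldType).

Definition klin (U W : lmodType k) (f : U -> W) : Prop :=
  forall (a : k) (u v : U), f (a *: u + v) = a *: f u + f v.

Definition kbilin (U W Z : lmodType k) (B : U -> W -> Z) : Prop :=
  (forall w : W, klin (fun u => B u w)) /\ (forall u : U, klin (B u)).

Variable (V : lmodType k).

Definition is_lie_bracket (br : V -> V -> V) : Prop :=
  kbilin br /\ (forall x, br x x = 0) /\
  (forall x y z, br (br x y) z + br (br y z) x + br (br z x) y = 0).

Definition trivial_center (br : V -> V -> V) : Prop :=
  forall z, (forall x, br z x = 0) -> z = 0.

Definition lie_delta1 (br : V -> V -> V) (f : V -> V) (x y : V) : V :=
  f (br x y) - br (f x) y - br x (f y).

Definition lie_delta2 (br : V -> V -> V) (phi : V -> V -> V) (x y z : V) : V :=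
  br (phi x y) z + br (phi y z) x + br (phi z x) y
  + phi (br x y) z + phi (br y z) x + phi (br z x) y.

Definition lie_cochain2 (phi : V -> V -> V) : Prop :=
  kbilin phi /\ (forall x, phi x x = 0).

Definition lie_cocycle (br : V -> V -> V) (phi : V -> V -> V) : Prop :=
  lie_cochain2 phi /\ (forall x y z, lie_delta2 br phi x y z = 0).

Definition lie_coboundary (br : V -> V -> V) (phi : V -> V -> V) : Prop :=
  exists f : V -> V, klin f /\ (forall x y, phi x y = lie_delta1 br f x y).

Definition SDX : lmodType k := (k^o * V)%type.

Definition unitX : SDX := (1 : k^o, 0 : V).

(* Delta(a,x) = (a,x) (x) (1,0) + (1,0) (x) (0,x), as a formal sum of pure tensors *)
Definition DeltaX (u : SDX) : seq (SDX * SDX) :=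
  [:: (u, unitX); (unitX, ((0 : k^o), u.2) : SDX)].

Definition qX (br : V -> V -> V) (u v : SDX) : SDX :=
  ((u.1 * v.1 : k) : k^o, v.1 *: u.2 + br u.2 v.2).

(* Equality in X (x) X of two formal sums of pure tensors: since X is a vector
   space over a field, bilinear forms X x X -> k separate the points of X (x) X. *)
Definition teq (s t : seq (SDX * SDX)) : Prop :=
  forall B : SDX -> SDX -> k^o, kbilin B ->
    \sum_(p <- s) B p.1 p.2 = \sum_(p <- t) B p.1 p.2.

(* C^1_BSD : linear f with Delta f = (f (x) 1 + 1 (x) f) Delta *)
Definition bsd_C1 (f : SDX -> SDX) : Prop :=
  klin f /\
  forall u : SDX,
    teq (DeltaX (f u))
        ([seq (f p.1, p.2) | p <- DeltaX u] ++ [seq (p.1, f p.2) | p <- DeltaX u]).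

(* C^2_BSD : linear phi : X (x) X -> X (i.e. bilinear X x X -> X) with
   Delta phi = (phi (x) q + q (x) phi)(1 (x) tau (x) 1)(Delta (x) Delta) *)
Definition bsd_C2 (br : V -> V -> V) (phi : SDX -> SDX -> SDX) : Prop :=
  kbilin phi /\
  forall u v : SDX,
    teq (DeltaX (phi u v))
        (flatten [seq [:: (phi p.1 r.1, qX br p.2 r.2); (qX br p.1 r.1, phi p.2 r.2)]
                 | p <- DeltaX u, r <- DeltaX v]).

Definition bsd_delta1 (br : V -> V -> V) (f : SDX -> SDX) (u v : SDX) : SDX :=
  f (qX br u v) - qX br (f u) v - qX br u (f v).

Definition bsd_delta2 (br : V -> V -> V) (phi : SDX -> SDX -> SDX) (u v w : SDX) : SDX :=
  qX br (phi u v) w + phi (qX br u v) w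
  - \sum_(p <- DeltaX w)
      (phi (qX br u p.1) (qX br v p.2)
       + qX br (phi u p.1) (qX br v p.2)
       + qX br (qX br u p.1) (phi v p.2)).

Definition bsd_cocycle (br : V -> V -> V) (phi : SDX -> SDX -> SDX) : Prop :=
  bsd_C2 br phi /\ (forall u v w, bsd_delta2 br phi u v w = 0).

Definition bsd_coboundary (br : V -> V -> V) (phi : SDX -> SDX -> SDX) : Prop :=
  exists f : SDX -> SDX, bsd_C1 f /\ (forall u v, phi u v = bsd_delta1 br f u v).

Definition PsiX (phi : V -> V -> V) (u v : SDX) : SDX := ((0 : k^o), phi u.2 v.2).

End BSD.

(* Main.v *)
Require Import Defs.
From HB Require Import structures.
From mathcomp Require Import all_boot all_algebra.
From mathcomp Require Import boolp classical_sets.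
From mathcomp Require Import ring.
Set Implicit Arguments. Unset Strict Implicit.
Import GRing.Theory.
Local Open Scope ring_scope.

Ltac pull p :=
  repeat (rewrite [in LHS](addrCA _ p _));
  try (rewrite [in LHS](addrC _ p); repeat (rewrite [in LHS](addrCA _ p _))).

Ltac cancel_step :=
  match goal with
  | |- - ?x + ?y = 0 => apply/eqP; rewrite addrC subr_eq0; apply/eqP; reflexivity
  | |- ?x + - ?y = 0 => apply/eqP; rewrite subr_eq0; apply/eqP; reflexivity
  | |- - ?x + _ = 0 => pull x; rewrite addNKr
  | |- ?h + _ = 0 => pull (- h); rewrite addKr
  end.

Ltac acnorm := rewrite ?opprD ?opprK -?addrA ?addr0 ?add0r.
Ltac ac0 := acnorm; repeat cancel_step; try done.

Lemma eq0_trans (Z : zmodType) (a b : Z) : a - b = 0 -> b = 0 -> a = 0.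
Proof. by move=> /eqP; rewrite subr_eq0 => /eqP -> . Qed.


Section Func.
Variables (k : fieldType) (V : lmodType k).

Definition linf (l : V -> k) := forall (a : k) (u v : V), l (a *: u + v) = a * l u + l v.

Lemma exists_functional (w : V) : w != 0 -> exists l : V -> k, linf l /\ l w = 1.
Proof.
move=> w0.
pose P (S : set V) := (forall a u v, S u -> S v -> S (a *: u + v)) /\ ~ S w.
have [A [[Acl Aw] Amax]] : exists A : set V, P A /\ (forall B : set V, (A `<` B)%classic -> ~ P B).
  apply: Zorn_bigcup => F FP Ftot; split.
    move=> a u v [X FX Xu] [Y FY Yv].
    have [XY|YX] := Ftot _ _ FX FY.
    - exists Y => //; apply: (FP _ FY).1 => //; exact: XY.
    - exists X => //; apply: (FP _ FX).1 => //; exact: YX.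
  by move=> [X FX Xw]; exact: (FP _ FX).2.
have A0 : A 0.
  apply: contrapT => nA0.
  apply: (Amax (fun x => x = 0)); last first.
    by split; [move=> a u v -> ->; rewrite scaler0 addr0 | by move=> wE; move: w0; rewrite wE eqxx].
  split; last by move=> /(_ 0 erefl).
  by move=> u Au; exfalso; apply: nA0; have := Acl (-1) u u Au Au; rewrite scaleN1r addNr.
have AZ a u : A u -> A (a *: u) by move=> Au; have := Acl a u 0 Au A0; rewrite addr0.
have AD u v : A u -> A v -> A (u + v) by move=> Au Av; have := Acl 1 u v Au Av; rewrite scale1r.
have ex v : exists c : k, A (v - c *: w).
  have [Av|nAv] := pselect (A v); first by exists 0; rewrite scale0r subr0.
  pose B : set V := fun y => exists m t, A m /\ y = m + t *: v.
  have Bw : B w.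
    apply: contrapT => nBw; apply: (Amax B); last first.
      split=> //.
      move=> a u1 u2 [m1 [t1 [Am1 ->]]] [m2 [t2 [Am2 ->]]].
      exists (a *: m1 + m2), (a * t1 + t2); split; first exact: Acl.
      by rewrite scalerDr scalerDl scalerA addrACA.
    split.
      by move=> u Au; exists u, 0; rewrite scale0r addr0.
    by move=> BA; apply: nAv; apply: BA; exists 0, 1; rewrite add0r scale1r.
  case: Bw => m [t [Am wE]].
  have t0 : t != 0.
    by apply/eqP => t0; apply: Aw; rewrite wE t0 scale0r addr0.
  exists t^-1; rewrite wE scalerDr scalerA mulVf // scale1r opprD addrCA subrr addr0.
  by rewrite -scaleNr; apply: AZ.
have uniq v c1 c2 : A (v - c1 *: w) -> A (v - c2 *: w) -> c1 = c2.
  move=> A1 A2; apply/eqP; apply: contraT => c12; exfalso; apply: Aw.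
  have : A ((c2 - c1)^-1 *: ((-1) *: (v - c2 *: w) + (v - c1 *: w))).
    by apply: AZ; apply: Acl.
  rewrite scaleN1r opprB addrA subrK -scalerBl scalerA mulVf ?scale1r //.
  by rewrite subr_eq0 eq_sym.
pose l v := projT1 (cid (ex v)).
have lP v : A (v - l v *: w) by rewrite /l; case: cid.
exists l; split.
  move=> a u v; apply: (uniq (a *: u + v)) => //.
  have := Acl a _ _ (lP u) (lP v).
  rewrite scalerBr scalerA scalerDl opprD.
  by congr A; rewrite !addrA; congr (_ + _); rewrite -!addrA; congr (_ + _); rewrite addrC.
by apply: (uniq w) => //; rewrite scale1r subrr.
Qed.
End Func.

Section Gen.
Variables (k : fieldType).
Lemma klinD (U W : lmodType k) (f : U -> W) : klin f -> forall u v, f (u + v) = f u + f v.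
Proof. by move=> H u v; rewrite -[u in LHS]scale1r H scale1r. Qed.
Lemma klin0 (U W : lmodType k) (f : U -> W) : klin f -> f 0 = 0.
Proof. by move=> H; have := H 1 0 0; rewrite scale1r addr0 scale1r => /(congr1 (fun z => z - f 0)); rewrite subrr addrK => /esym. Qed.
Lemma klinZ (U W : lmodType k) (f : U -> W) : klin f -> forall a u, f (a *: u) = a *: f u.
Proof. by move=> H a u; have := H a u 0; rewrite addr0 (klin0 H) addr0. Qed.
Lemma klinN (U W : lmodType k) (f : U -> W) : klin f -> forall u, f (- u) = - f u.
Proof. by move=> H u; rewrite -scaleN1r klinZ // scaleN1r. Qed.
Lemma klinB (U W : lmodType k) (f : U -> W) : klin f -> forall u v, f (u - v) = f u - f v.
Proof. by move=> H u v; rewrite klinD // klinN. Qed.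
End Gen.

Section Bil.
Variables (k : fieldType) (V : lmodType k) (g : V -> V -> V).
Hypothesis gB : kbilin g.
Lemma g0l y : g 0 y = 0. Proof. exact: (klin0 (gB.1 y)). Qed.
Lemma g0r x : g x 0 = 0. Proof. exact: (klin0 (gB.2 x)). Qed.
Lemma gDl x y z : g (x + y) z = g x z + g y z. Proof. exact: (klinD (gB.1 z)). Qed.
Lemma gDr x y z : g x (y + z) = g x y + g x z. Proof. exact: (klinD (gB.2 x)). Qed.
Lemma gZl a x y : g (a *: x) y = a *: g x y. Proof. exact: (klinZ (gB.1 y)). Qed.
Lemma gZr a x y : g x (a *: y) = a *: g x y. Proof. exact: (klinZ (gB.2 x)). Qed.
Lemma gNl x y : g (- x) y = - g x y. Proof. exact: (klinN (gB.1 y)). Qed.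
Lemma gNr x y : g x (- y) = - g x y. Proof. exact: (klinN (gB.2 x)). Qed.
Lemma gBl x y z : g (x - y) z = g x z - g y z. Proof. exact: (klinB (gB.1 z)). Qed.
Lemma gBr x y z : g x (y - z) = g x y - g x z. Proof. exact: (klinB (gB.2 x)). Qed.
Lemma g_anti : (forall x, g x x = 0) -> forall x y, g y x = - g x y.
Proof.
move=> gxx x y; apply/eqP; rewrite -addr_eq0; apply/eqP.
have := gxx (x + y); rewrite gDl !gDr !gxx add0r addr0 => /eqP.
by rewrite addrC => /eqP.
Qed.
End Bil.

Lemma add_self_eq (Z : zmodType) (a b : Z) : a = a + b -> b = 0.
Proof. by move=> /(congr1 (fun z => -a + z)); rewrite addNr addKr => /esym. Qed.

Lemma self_add (Z : zmodType) (x : Z) : x = x + x -> x = 0.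
Proof. by move=> /(congr1 (fun z => z - x)); rewrite subrr addrK => /esym. Qed.

Section Main.
Variables (k : fieldType) (V : lmodType k) (br : V -> V -> V).
Hypothesis Hlie : is_lie_bracket br.

Let brl w : klin (fun u => br u w). Proof. by case: Hlie => [[]]. Qed.
Let brr u : klin (br u). Proof. by case: Hlie => [[]]. Qed.
Lemma br0l y : br 0 y = 0. Proof. exact: (klin0 (brl y)). Qed.
Lemma br0r x : br x 0 = 0. Proof. exact: (klin0 (brr x)). Qed.
Lemma brDl x y z : br (x + y) z = br x z + br y z. Proof. exact: (klinD (brl z)). Qed.
Lemma brDr x y z : br x (y + z) = br x y + br x z. Proof. exact: (klinD (brr x)). Qed.
Lemma brZl a x y : br (a *: x) y = a *: br x y. Proof. exact: (klinZ (brl y)). Qed.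
Lemma brZr a x y : br x (a *: y) = a *: br x y. Proof. exact: (klinZ (brr x)). Qed.
Lemma brNl x y : br (- x) y = - br x y. Proof. exact: (klinN (brl y)). Qed.
Lemma brNr x y : br x (- y) = - br x y. Proof. exact: (klinN (brr x)). Qed.
Lemma brxx x : br x x = 0. Proof. by case: Hlie => _ []. Qed.
Lemma br_anti x y : br y x = - br x y.
Proof.
apply/eqP; rewrite -addr_eq0; apply/eqP.
have := brxx (x + y); rewrite brDl !brDr !brxx add0r addr0 => /eqP.
by rewrite addrC => /eqP.
Qed.
Lemma jacobi x y z : br (br x y) z + br (br y z) x + br (br z x) y = 0.
Proof. by case: Hlie => _ []. Qed.

Definition B11 (p r : SDX V) : k^o := p.1 * r.1.
Lemma B11_bilin : kbilin B11.
Proof. by split=> [w a u v|u a v w]; rewrite /B11 /= ?mulrDl ?mulrDr -?scalerAl -?scalerAr. Qed.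

Lemma C1_fst (F : SDX V -> SDX V) : bsd_C1 F -> forall x, (F (0, x)).1 = 0.
Proof.
case=> FL FC x; have := FC (0, x) B11 B11_bilin.
rewrite /DeltaX /= !big_cons !big_nil /B11 /=.
rewrite !mulr1 !mulr0 !mul0r !addr0 !mul1r !add0r; exact: self_add.
Qed.

Lemma part3 (phi : V -> V -> V) : bsd_coboundary br (PsiX phi) -> lie_coboundary br phi.
Proof.
case=> F [FC1 FE]; have F1 := C1_fst FC1.
exists (fun x => (F (0, x)).2); split.
  move=> a x y; have FL := FC1.1.
  have -> : ((0, a *: x + y) : SDX V) = a *: (0, x) + (0, y) by rewrite -[RHS]/(a * 0 + 0, a *: x + y) mulr0 addr0.
  by rewrite klinD // klinZ.
move=> x y; have := FE (0, x) (0, y); rewrite /PsiX /bsd_delta1 /qX /= => [[_ ->]].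
by rewrite F1 !mul0r !scale0r !add0r /lie_delta1.
Qed.

Lemma SDX_eq (p q : SDX V) : p.1 = q.1 -> p.2 = q.2 -> p = q.
Proof. by case: p q => [? ?] [? ?] /= -> ->. Qed.

Lemma part2 (phi : V -> V -> V) : lie_coboundary br phi -> bsd_coboundary br (PsiX phi).
Proof.
case=> f [fL fE].
pose F (u : SDX V) : SDX V := (0, f u.2).
have FL : klin F.
  move=> a u v; apply: SDX_eq; rewrite /F /=; first by rewrite scaler0 addr0.
  exact: fL.
have f0 := klin0 fL.
exists F; split.
  split; first exact: FL.
  move=> u B HB; destruct HB as [BL BR].
  have B0l w : B 0 w = 0 by apply: (klin0 (BL w)).
  have B0r w : B w 0 = 0 by apply: (klin0 (BR w)).
  rewrite /DeltaX /= !big_cons !big_nil /F /= f0.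
  by rewrite B0l B0r !add0r.
move=> u v; apply: SDX_eq; rewrite /PsiX /bsd_delta1 /F /qX /=.
  by rewrite mul0r mulr0 !subr0.
rewrite fE /lie_delta1 (klinD fL) (klinZ fL) scale0r add0r.
by rewrite opprD addrA [v.1 *: _ + _]addrC addrK.
Qed.

Lemma brB : kbilin br. Proof. by case: Hlie. Qed.

Lemma part1 (phi : V -> V -> V) : lie_cocycle br phi -> bsd_cocycle br (PsiX phi).
Proof.
case=> [[pB pxx] pC].
have pA := g_anti pB pxx.
have bA := br_anti.
split.
  split.
    split=> [w a u v|u a v w]; apply: SDX_eq; rewrite /PsiX /= ?mulr0 ?scaler0 ?addr0 //.
      by rewrite (gDl pB) (gZl pB).
    by rewrite (gDr pB) (gZr pB).
  move=> u v B HB; destruct HB as [BL BR].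
  have B0l w : B 0 w = 0 by apply: (klin0 (BL w)).
  have B0r w : B w 0 = 0 by apply: (klin0 (BR w)).
  rewrite /DeltaX /= !big_cons !big_nil /PsiX /qX /unitX /=.
  rewrite !(g0l pB) !(g0r pB) ?br0l ?br0r ?mul1r ?mulr1 ?mulr0 ?mul0r ?scaler0 ?scale0r ?scale1r !addr0.
  have B0r' w : B w (0, 0) = 0 by apply: B0r.
  have B0l' w : B (0, 0) w = 0 by apply: B0l.
  rewrite !B0r' !B0l' ?add0r ?addr0. by [].
move=> u v w; apply: SDX_eq; rewrite /PsiX /bsd_delta2 /DeltaX !big_cons !big_nil /qX /=.
  by rewrite !mul0r !mulr0 !addr0 subrr.
rewrite ?(g0l pB) !(g0r pB) ?br0l ?br0r ?mul1r ?mulr1 ?mulr0 ?mul0r ?scaler0 ?scale0r ?scale1r ?addr0 ?add0r.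
rewrite !(gDl pB) !(gZl pB).
have := pC u.2 v.2 w.2; rewrite /lie_delta2 (bA u.2 (phi v.2 w.2)) (pA u.2 w.2) brNl (pA u.2 (br v.2 w.2)) (bA u.2 w.2) (gNl pB).
move=> H; apply: (eq0_trans _ H). 
acnorm. ac0.
Qed.

Ltac simp0 := rewrite ?(mulr1, mulr0, mul1r, mul0r, scaler0, scale0r, scale1r, addr0, add0r, br0l, br0r, subr0, sub0r).

Lemma linf0 (l : V -> k) : linf l -> l 0 = 0.
Proof. move=> H; have := H 1 0 0; rewrite scale1r addr0 mul1r; exact: self_add. Qed.

Definition Bl (l1 l2 : V -> k) (p r : SDX V) : k^o := l1 p.2 * l2 r.2.
Lemma Bl_bilin l1 l2 : linf l1 -> linf l2 -> kbilin (Bl l1 l2).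
Proof.
move=> H1 H2; split=> [w a u v|u a v w]; rewrite /Bl /=.
  by rewrite H1 mulrDl -mulrA.
by rewrite H2 mulrDr mulrCA.
Qed.

Definition hat (x : V) : SDX V := (0, x).

Lemma part4 : trivial_center br ->
     forall psi : SDX V -> SDX V -> SDX V, bsd_cocycle br psi ->
       exists phi : V -> V -> V, lie_cocycle br phi /\
         bsd_coboundary br (fun u v => psi u v - PsiX phi u v).
Proof.
move=> tc psi [[pB C2] Cc].
have bA := br_anti.
have p0l1 w : (psi (0, 0) w).1 = 0 by rewrite (g0l pB).
have p0l2 w : (psi (0, 0) w).2 = 0 by rewrite (g0l pB).
have p0r1 w : (psi w (0, 0)).1 = 0 by rewrite (g0r pB).
have p0r2 w : (psi w (0, 0)).2 = 0 by rewrite (g0r pB).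
have fstE (u v : SDX V) : u.1 * v.1 * (psi (1, 0) (1, 0)).1 +
   (u.1 * (psi (1, 0) (0, v.2)).1 +
    (v.1 * (psi (0, u.2) (1, 0)).1 + (psi (0, u.2) (0, v.2)).1)) = 0.
  have := C2 u v B11 B11_bilin; rewrite /DeltaX /= !big_cons !big_nil /B11 /qX /unitX /=.
  rewrite ?mulr1 ?mulr0 ?mul1r ?mul0r ?scaler0 ?scale0r ?scale1r ?br0l ?br0r ?addr0 ?add0r ?p0l1 ?p0r1.
  exact: add_self_eq.
have beta x y : (psi (0, x) (0, y)).1 = 0.
  by have := fstE (0, x) (0, y); rewrite /= ?mul0r ?add0r.
have nu x : (psi (0, x) (1, 0)).1 = 0.
  by have := fstE (0, x) (1, 0); rewrite /= ?mul0r ?mul1r ?p0r1 ?add0r addr0.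
have mu y : (psi (1, 0) (0, y)).1 = 0.
  by have := fstE (1, 0) (0, y); rewrite /=; simp0; rewrite ?p0l1; simp0.
have alpha : (psi (1, 0) (1, 0)).1 = 0.
  by have := fstE (1, 0) (1, 0); rewrite /=; simp0; rewrite ?p0l1 ?p0r1; simp0.
have dec (u : SDX V) : u = u.1 *: (1, 0) + (0, u.2).
  apply: SDX_eq; rewrite /=; simp0; by rewrite -?[_%:A]/(u.1 * 1) ?mulr1.
have pdec u v : psi u v = u.1 *: (v.1 *: psi (1, 0) (1, 0) + psi (1, 0) (0, v.2))
   + (v.1 *: psi (0, u.2) (1, 0) + psi (0, u.2) (0, v.2)).
  by rewrite {1}(dec u) {1}(dec v) (gDl pB) !(gZl pB) !(gDr pB) !(gZr pB).
have pfst u v : (psi u v).1 = 0.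
  by rewrite pdec /= alpha mu nu beta; simp0.
have e0 : (psi (1, 0) (1, 0)).2 = 0.
  apply: tc => z.
  have := Cc (1, 0) (1, 0) (0, z); rewrite /bsd_delta2 /DeltaX !big_cons !big_nil /qX /unitX /=.
  move/(congr1 snd) => /=.
  simp0; rewrite ?pfst ?p0l2 ?p0r2; simp0.
  by rewrite addrK.
have Cm (l1 l2 : V -> k) (x y : V) : linf l1 -> linf l2 ->
    0 = l1 x * l2 (psi (1, 0) (0, y)).2 + l1 (psi (1, 0) (0, y)).2 * l2 x.
  move=> L1 L2; have := C2 (0, x) (0, y) _ (Bl_bilin L1 L2).
  rewrite /DeltaX /= !big_cons !big_nil /Bl /qX /unitX /=.
  by simp0; rewrite ?pfst ?p0l2 ?p0r2 ?e0 ?(linf0 L1) ?(linf0 L2); simp0.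
have m0 y : (psi (1, 0) (0, y)).2 = 0.
  have Cmw := fun l1 l2 x => Cm l1 l2 x y.
  set w := (psi (1, 0) (0, y)).2 in Cmw *.
  have [//|w0] := eqVneq w 0; exfalso.
  have [x bx] : exists x, br w x != 0.
    apply: contrapT => nex; move/eqP: w0; apply; apply: tc => x.
    apply/eqP; apply: contrapT => ne; apply: nex; exists x; exact/negP.
  have [l1 [L1 l1w]] := exists_functional w0.
  have x'0 : x - l1 x *: w != 0.
    apply/eqP => h; move: bx; have -> : x = l1 x *: w by apply/eqP; rewrite -subr_eq0 h.
    by rewrite brZr brxx scaler0 eqxx.
  have [l2 [L2 l2x]] := exists_functional x'0.
  pose l' v := l2 v - l2 w * l1 v.
  have L' : linf l' by move=> a u v; rewrite /l' L1 L2; ring.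
  have l'w : l' w = 0 by rewrite /l' l1w mulr1 subrr.
  have l'x : l' x = 1.
    rewrite -l2x /l'; have -> : x - l1 x *: w = (- l1 x) *: w + x by rewrite addrC scaleNr.
    by rewrite L2; ring.
  have := Cmw l1 l' x L1 L'; rewrite l'w l'x l1w mulr0 mul1r add0r => /esym/eqP.
  by rewrite oner_eq0.
have E1 (x z : V) : br (psi (0, x) (1, 0)).2 z = (psi (0, br x z) (1, 0)).2.
  have := Cc (0, x) (1, 0) (0, z); rewrite /bsd_delta2 /DeltaX !big_cons !big_nil /qX /unitX /=.
  move/(congr1 snd) => /=.
  simp0; rewrite ?pfst ?p0l2 ?p0r2 ?e0 ?m0; simp0 => H.
  apply/eqP; rewrite -subr_eq0; apply/eqP; apply: (eq0_trans _ H); ac0.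
have E2 (x y : V) : (psi (0, br x y) (1, 0)).2 = br (psi (0, x) (1, 0)).2 y + br x (psi (0, y) (1, 0)).2.
  have := Cc (0, x) (0, y) (1, 0); rewrite /bsd_delta2 /DeltaX !big_cons !big_nil /qX /unitX /=.
  move/(congr1 snd) => /=.
  simp0; rewrite ?pfst ?p0l2 ?p0r2 ?e0 ?m0; simp0 => H.
  apply/eqP; rewrite -subr_eq0; apply/eqP; apply: (eq0_trans _ H); ac0.
have n0 y : (psi (0, y) (1, 0)).2 = 0.
  apply: tc => x; rewrite bA; apply/eqP; rewrite oppr_eq0; apply/eqP.
  by have := E2 x y; rewrite -E1 => /eqP; rewrite addrC -subr_eq subrr eq_sym => /eqP.
have [phi pnf] : exists phi : V -> V -> V, forall u v, psi u v = (0, phi u.2 v.2).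
  exists (fun x y => (psi (0, x) (0, y)).2) => u v; apply: SDX_eq; first exact: pfst.
  by rewrite pdec /= e0 m0 n0; simp0.
have hatL a x y : ((0, a *: x + y) : SDX V) = a *: (0, x) + (0, y).
  by rewrite -[RHS]/(a * 0 + 0, a *: x + y) mulr0 addr0.
have phB : kbilin phi.
  split=> [z a x y|x a y z].
    by have := pnf (0, a *: x + y) (0, z); rewrite hatL (gDl pB) (gZl pB) !pnf => /(congr1 snd).
  by have := pnf (0, x) (0, a *: y + z); rewrite hatL (gDr pB) (gZr pB) !pnf => /(congr1 snd).
have phxx y : phi y y = 0.
  apply: tc => x; rewrite bA; apply/eqP; rewrite oppr_eq0; apply/eqP.
  have := Cc (0, x) (0, y) (0, y); rewrite /bsd_delta2 /DeltaX !big_cons !big_nil !pnf /qX /unitX /=.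
  move/(congr1 snd) => /=.
  simp0; rewrite brxx ?(g0l phB) ?(g0r phB); simp0 => H.
  apply: oppr_inj; rewrite oppr0; apply: (eq0_trans _ H); ac0.
have pA := g_anti phB phxx.
exists phi; split.
  split; first by split.
  move=> x y z.
  have := Cc (0, x) (0, y) (0, z); rewrite /bsd_delta2 /DeltaX !big_cons !big_nil !pnf /qX /unitX /=.
  move/(congr1 snd) => /=.
  simp0; rewrite ?(g0l phB) ?(g0r phB); simp0 => H.
  rewrite /lie_delta2 (bA x (phi y z)) (pA x z) brNl (pA x (br y z)) (bA x z) (gNl phB).
  apply: (eq0_trans _ H); ac0.
exists (fun _ => 0); split.
  split; first by move=> a u v; rewrite scaler0 addr0.
  move=> u B HB; destruct HB as [BL BR].
  have B0l w : B 0 w = 0 by apply: (klin0 (BL w)).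
  have B0r w : B w 0 = 0 by apply: (klin0 (BR w)).
  rewrite /DeltaX /= !big_cons !big_nil.
  have B0r' w : B w (0, 0) = 0 by apply: B0r.
  by rewrite ?B0l ?B0r ?B0r'; simp0.
move=> u v; rewrite pnf /PsiX /bsd_delta1 /qX; apply: SDX_eq => /=; simp0.
  by [].
by rewrite subrr oppr0.
Qed.
End Main.
Unset Implicit Arguments.

Theorem mainTheorem6 (k : fieldType) (V : lmodType k) (br : V -> V -> V)
  (Hlie : is_lie_bracket br) :
  (* Psi^2 is well defined on cohomology: cocycles to cocycles ... *)
  (forall phi : V -> V -> V, lie_cocycle br phi -> bsd_cocycle br (PsiX phi)) /\
  (* ... and coboundaries to coboundaries *)
  (forall phi : V -> V -> V, lie_coboundary br phi -> bsd_coboundary br (PsiX phi)) /\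
  (* injectivity *)
  (forall phi : V -> V -> V, lie_cocycle br phi ->
     bsd_coboundary br (PsiX phi) -> lie_coboundary br phi) /\
  (* surjectivity when the center is trivial *)
  (trivial_center br ->
     forall psi : SDX V -> SDX V -> SDX V, bsd_cocycle br psi ->
       exists phi : V -> V -> V, lie_cocycle br phi /\
         bsd_coboundary br (fun u v => psi u v - PsiX phi u v)).
Proof.
split; first exact: (part1 Hlie).
split; first exact: part2.
split; first by move=> phi _; exact: part3.
exact: (part4 Hlie).
Qed.
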